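(* Let $N\ge 1$, $Z=\{1,\dots,N\}$, and let $W=(w_{ij})\in\mathbb R^{N\times N}$ be a symmetric weight matrix with nonnegative entries and positive degrees $d_i=\sum_{j\in Z}w_{ij}$; put $D=\mathrm{diag}(d_i)$ and, for some $p\in\mathbb R$, $L=D^{-p}(D-W)D^{-p}$. For $\tau^2,\alpha>0$ let $C_\tau=\tau^{2\alpha}(L+\tau^2 I)^{-\alpha}=(c_{ij})$, with columns $\mathbf c_j=C_\tau\mathbf e_j$, where $\mathbf e_j$ is the $j$-th standard basis vector of $\mathbb R^N$. Let $Z'\subseteq Z$ and $y:Z'\to\{-1,+1\}$. Let $\psi$ be a probability density on $\mathbb R$ that is continuously differentiable, symmetric, strictly log-concave and has full support on $\mathbb R$, with CDF $\Psi$. Define $$\mathsf J(\mathbf u)=\tfrac12\langle \mathbf u,C_\tau^{-1}\mathbf u\rangle-\sum_{j\in Z'}\log\Psi(u_jy(j)),\qquad \mathbf u\in\mathbb R^N,$$ and $F_j(s)=\dfrac{y(j)\psi(sy(j))}{\Psi(sy(j))}$ for $j\in Z'$. Then: (i) $\mathsf J$ has a unique minimizer $\mathbf u^\ast\in\mathbb R^N$; (ii) $\mathbf u^\ast$ satisfies $C_\tau^{-1}\mathbf u^\ast=\sum_{j\in Z'}F_j(u^\ast_j)\mathbf e_j$; (iii) $\mathbf u^\ast=\sum_{j\in Z'}\breve a_j\mathbf c_j$ for some coefficients $\breve a_j\in\mathbb R$; (iv) a vector of the form $\mathbf u^\ast=\sum_{j\in Z'}\breve a_j\mathbf c_j$ solves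 the equation in (ii) if and only if the coefficients satisfy $\breve a_j=F_j\big(\sum_{k\in Z'}\breve a_kc_{jk}\big)$ for all $j\in Z'$.
   Context: $\langle\cdot,\cdot\rangle$ is the Euclidean inner product on $\mathbb R^N$. *)

(* Defs.v *)
From HB Require Import structures.
From mathcomp Require Import all_boot all_order all_algebra.
From mathcomp Require Import all_classical all_reals all_analysis.
Set Implicit Arguments. Unset Strict Implicit. Unset Printing Implicit Defensive.
Import Order.TTheory GRing.Theory Num.Theory.
Local Open Scope ring_scope.
Local Open Scope classical_set_scope.

Section Defs.
Variable R : realType.

Definition is_mx_rpow (n : nat) (M : 'M[R]_n) (a : R) (P : 'M[R]_n) : Prop :=
  exists (Q : 'M[R]_n) (lam : 'rV[R]_n),
    [/\ Q *m Q^T = 1%:M, (forall i, 0 < lam 0 i),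
        M = Q *m diag_mx lam *m Q^T &
        P = Q *m diag_mx (map_mx (fun x => x `^ a) lam) *m Q^T].

Definition degree (n : nat) (W : 'M[R]_n) (i : 'I_n) : R := \sum_(j < n) W i j.

Definition normalized_laplacian (n : nat) (W : 'M[R]_n) (p : R) : 'M[R]_n :=
  let D := diag_mx (\row_i degree W i) in
  let Dp := diag_mx (\row_i (degree W i) `^ (- p)) in
  Dp *m (D - W) *m Dp.

Definition strictly_log_concave (f : R -> R) : Prop :=
  forall x y t : R, x != y -> 0 < t < 1 ->
    t * ln (f x) + (1 - t) * ln (f y) < ln (f (t * x + (1 - t) * y)).

Definition prob_density (f : R -> R) : Prop :=
  (forall x, 0 <= f x) /\
  measurable_fun setT f /\
  (\int[@lebesgue_measure R]_(t in setT) (f t)%:E = 1)%E.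

Definition C1_fun (f : R -> R) : Prop :=
  (forall x, derivable f x 1) /\ continuous (f^`() : R^o -> R^o).

Definition is_cdf_of (f Fc : R -> R) : Prop :=
  forall x, (\int[@lebesgue_measure R]_(t in `]-oo, x]) (f t)%:E = (Fc x)%:E)%E.

Definition Jfun (n : nat) (C : 'M[R]_n) (S : {set 'I_n}) (y : 'I_n -> R)
  (Psi : R -> R) (u : 'cV[R]_n) : R :=
  2^-1 * (u^T *m invmx C *m u) 0 0 - \sum_(j in S) ln (Psi (u j 0 * y j)).

Definition Ffun (n : nat) (y : 'I_n -> R) (psi Psi : R -> R) (j : 'I_n) (s : R) : R :=
  y j * psi (s * y j) / Psi (s * y j).

End Defs.

(* Main.v *)
Require Import Defs.
From HB Require Import structures.
From mathcomp Require Import all_boot all_order all_algebra.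
From mathcomp Require Import all_classical all_reals all_analysis.
Import Order.TTheory GRing.Theory Num.Theory.
Local Open Scope ring_scope.
Local Open Scope classical_set_scope.

From mathcomp Require Import measurable_realfun.
From mathcomp Require Import ring lra.
Import numFieldNormedType.Exports.

Section A.
Set Implicit Arguments. Unset Strict Implicit.
Context {R : realType}.
Notation mu := (@lebesgue_measure R).

Lemma psi_cont (psi : R -> R) : C1_fun psi -> continuous psi.
Proof. move=> [d _] x; apply: differentiable_continuous; exact/derivable1_diffP. Qed.

Lemma psi_int (psi : R -> R) : prob_density psi ->
  forall A : set R, measurable A -> mu.-integrable A (EFin \o psi).
Proof.
move=> [p0 [mp i1]] A mA; apply/integrableP; split.
  by apply/measurable_EFinP; exact: measurable_funS mp.
have H t : (`|(EFin \o psi) t| = (psi t)%:E)%E by rewrite /= ger0_norm.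
under eq_integral => t _ do rewrite H.
apply: (@le_lt_trans _ _ (\int[mu]_(t in setT) (psi t)%:E)%E); last by rewrite i1 ltry.
apply: ge0_subset_integral => //=.
- exact/measurable_EFinP.
- by move=> t _; rewrite lee_fin.
Qed.

Lemma Psi_eq (psi Psi : R -> R) : is_cdf_of psi Psi ->
  forall x, Psi x = \int[mu]_(t in `]-oo, x]) psi t.
Proof. by move=> H x; rewrite /Rintegral H. Qed.

Lemma Psi_deriv (psi Psi : R -> R) : prob_density psi -> C1_fun psi ->
  is_cdf_of psi Psi -> forall x, derivable Psi x 1 /\ Psi^`() x = psi x.
Proof.
move=> pd c1 cdf x.
have := @continuous_FTC1 R psi (BInfty _ true) x (x + 1) ltac:(by rewrite ltrDl).
move=> /(_ (psi_int pd _)) /=.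
have -> : (fun x0 : R => \int[mu]_(t in `]-oo, x0]) psi t) = Psi.
  by apply/funext => y; rewrite (Psi_eq cdf).
apply => //; last exact: psi_cont.
exact: ltNyr.
Qed.


Lemma Psi_le1 (psi Psi : R -> R) : prob_density psi -> is_cdf_of psi Psi ->
  forall x, Psi x <= 1.
Proof.
move=> [p0 [mp i1]] cdf x; rewrite -lee_fin -(cdf x) -i1.
apply: ge0_subset_integral => //=.
- exact/measurable_EFinP.
- by move=> t _; rewrite lee_fin.
Qed.

Lemma Psi_ge0 (psi Psi : R -> R) : prob_density psi -> is_cdf_of psi Psi ->
  forall x, 0 <= Psi x.
Proof.
move=> [p0 [mp i1]] cdf x; rewrite -lee_fin -(cdf x).
by apply: integral_ge0 => t _; rewrite lee_fin.
Qed.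

Lemma Psi_gt0 (psi Psi : R -> R) : prob_density psi -> C1_fun psi ->
  (forall x, 0 < psi x) -> is_cdf_of psi Psi ->
  forall x, 0 < Psi x.
Proof.
move=> pd c1 pos cdf x; rewrite lt_def (Psi_ge0 pd cdf) andbT.
apply/eqP => Px0.
have D := Psi_deriv pd c1 cdf.
have : is_derive x 1 Psi 0.
  apply: (@derive1_at_min _ _ (x - 1) (x + 1)).
  - by rewrite lerD2l; apply: (@le_trans _ _ 0); rewrite ?oppr_le0 ?ler01.
  - by move=> t _; exact: (D t).1.
  - by rewrite in_itv /= ltrBlDr !ltrDl ltr01.
  - by move=> t _; rewrite Px0 (Psi_ge0 pd cdf).
move=> dP; have := @derive_val _ _ _ _ _ _ _ dP.
by rewrite -derive1E (D x).2 => /eqP; rewrite gt_eqF.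
Qed.

Lemma derive_shift (d : R) : (fun s : R => s + d)^`() = cst 1.
Proof.
apply/funext => x; rewrite derive1E.
have H : is_derive x 1 (fun s : R => s + d) (1 + 0).
  exact: is_deriveD.
rewrite addr0 in H.
by rewrite derive_val.
Qed.

Lemma shift_integral (psi : R -> R) (d b : R) : continuous psi ->
  (forall x, 0 <= psi x) ->
  (\int[mu]_(x in `]-oo, (b + d)%R]) (psi x)%:E =
   \int[mu]_(x in `]-oo, b]) (psi (x + d)%R)%:E)%E.
Proof.
move=> cpsi p0.
have := @increasing_ge0_integration_by_substitutionNy R (fun s => s + d) psi b.
rewrite derive_shift.
move=> ->.
- by apply: eq_integral => x _; rewrite /= mulr1.
- by move=> x y _ _; rewrite ltrD2r.
- by move=> x _; exact: cst_continuous.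
- by apply/cvg_ex; exists 1; exact: cvg_cst.
- exact: cvg_cst.
- split.
    move=> x _.
    have H : is_derive x 1 (fun s : R => s + d) (1 + 0) by exact: is_deriveD.
    exact: ex_derive.
  apply: cvg_at_left_filter; apply: cvgD; [exact: cvg_id | exact: cvg_cst].
- exact: cvg_addrr_Ny.
- by apply: continuous_subspaceT.
- by move=> x _.
Qed.

Lemma lc_pair (psi : R -> R) : strictly_log_concave psi -> (forall x, 0 < psi x) ->
  forall s x z, s <= x -> x < z -> psi z * psi s <= psi x * psi (s + (z - x)).
Proof.
move=> slc pos s x z sx xz.
have [->|sltx] := eqVneq s x.
  by rewrite addrC subrK mulrC.
have {sltx} sx' : s < x by rewrite lt_def eq_sym sltx sx.
have sz : s < z := lt_trans sx' xz.
set l := (z - x) / (z - s).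
have zs0 : 0 < z - s by rewrite subr_gt0.
have l0 : 0 < l by rewrite divr_gt0 // subr_gt0.
have l1 : l < 1 by rewrite ltr_pdivrMr // mul1r ltrD2l ltrN2.
have ne : s != z by rewrite lt_eqF.
have H1 := slc s z l ne ltac:(by rewrite l0 l1).
have H2 := slc s z (1 - l) ne ltac:(by rewrite subr_gt0 l1 ltrBlDr ltrDl l0).
have e1 : l * s + (1 - l) * z = x.
  rewrite /l; field; by rewrite gt_eqF.
have e2 : (1 - l) * s + (1 - (1 - l)) * z = s + (z - x).
  rewrite /l; field; by rewrite gt_eqF.
rewrite e1 in H1; rewrite e2 in H2.
have : ln (psi z * psi s) < ln (psi x * psi (s + (z - x))).
  rewrite !lnM ?posrE ?pos //.
  have := ltrD H1 H2.
  by apply: le_lt_trans; rewrite le_eqVlt; apply/orP; left; apply/eqP; ring.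
by rewrite ltr_ln ?posrE ?mulr_gt0 ?pos // => /ltW.
Qed.

Lemma Psi_ratio (psi Psi : R -> R) : prob_density psi -> C1_fun psi ->
  strictly_log_concave psi -> (forall x, 0 < psi x) -> is_cdf_of psi Psi ->
  forall x z, x < z -> psi z * Psi x <= psi x * Psi z.
Proof.
move=> pd c1 slc pos cdf x z xz.
have [p0 [mp _]] := pd.
have cp := psi_cont c1.
have Ez : ((Psi z)%:E = \int[mu]_(t in `]-oo, x]) (psi (t + (z - x))%R)%:E)%E.
  by rewrite -shift_integral ?subrKC //; move=> t; exact: ltW.
rewrite -lee_fin !EFinM Ez -cdf.
have cs : continuous (fun t => psi (t + (z - x))).
  by move=> t; apply: continuous_comp; [apply: cvgD; [exact: cvg_id|exact: cvg_cst]|exact: cp].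
have m1 : measurable_fun `]-oo, x] (EFin \o psi).
  by apply/measurable_EFinP; apply: measurable_funS mp.
have m2 : measurable_fun `]-oo, x] (EFin \o (fun t => psi (t + (z - x)))).
  by apply/measurable_EFinP; apply: measurable_funS (continuous_measurable_fun cs).
have n1 : forall t, `]-oo, x] t -> (0 <= (EFin \o psi) t)%E.
  by move=> t _; rewrite lee_fin.
have n2 : forall t, `]-oo, x] t -> (0 <= (EFin \o (fun t => psi (t + (z - x))%R)) t)%E.
  by move=> t _; rewrite lee_fin; exact: ltW.
rewrite -(ge0_integralZl_EFin mu (measurable_itv _) n1 m1 (ltW (pos z))).
rewrite -(ge0_integralZl_EFin mu (measurable_itv _) n2 m2 (ltW (pos x))).
apply: ge0_le_integral => //.
- by move=> t _; rewrite lee_fin mulr_ge0 // ltW.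
- apply/measurable_EFinP; apply: measurable_funS (continuous_measurable_fun _) => //.
  by move=> t; apply: continuousM; [exact: cst_continuous|exact: cp].
- apply/measurable_EFinP; apply: measurable_funS (continuous_measurable_fun _) => //.
  by move=> t; apply: continuousM; [exact: cst_continuous|exact: cs].
- move=> t /=; rewrite in_itv /= => tx; rewrite lee_fin.
  by apply: lc_pair.
Qed.
End A.

Section B.
Set Implicit Arguments. Unset Strict Implicit.
Context {R : realType}.

Lemma spd_inv n (Q : 'M[R]_n) (c c' : R) (mu nu : 'rV[R]_n) :
  Q *m Q^T = 1%:M -> c * c' = 1 -> (forall i, mu 0 i * nu 0 i = 1) ->
  (c *: (Q *m diag_mx mu *m Q^T)) *m (c' *: (Q *m diag_mx nu *m Q^T)) = 1%:M.
Proof.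
move=> QQ cc mn.
have QtQ := mulmx1C QQ.
rewrite -scalemxAl -scalemxAr scalerA cc scale1r.
rewrite -!mulmxA (mulmxA Q^T) QtQ mul1mx (mulmxA (diag_mx mu)) mulmx_diag.
have -> : diag_mx (\row_j (mu 0 j * nu 0 j)) = 1%:M.
  by apply/matrixP => i j; rewrite !mxE mn.
by rewrite mul1mx.
Qed.

Lemma spd_sym n (Q : 'M[R]_n) (c : R) (mu : 'rV[R]_n) :
  (c *: (Q *m diag_mx mu *m Q^T))^T = c *: (Q *m diag_mx mu *m Q^T).
Proof. by rewrite linearZ /= !trmx_mul trmxK tr_diag_mx mulmxA. Qed.

Lemma sumsq_Q n (Q : 'M[R]_n) (u : 'cV[R]_n) : Q *m Q^T = 1%:M ->
  \sum_i (Q^T *m u) i 0 ^+ 2 = \sum_i u i 0 ^+ 2.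
Proof.
move=> QQ.
have E (v : 'cV[R]_n) : \sum_i v i 0 ^+ 2 = (v^T *m v) 0 0.
  by rewrite mxE; apply: eq_bigr => i _; rewrite !mxE expr2.
by rewrite !E trmx_mul trmxK mulmxA -(mulmxA u^T) QQ mulmx1.
Qed.

Lemma quad_lb n (Q : 'M[R]_n) (c : R) (nu : 'rV[R]_n) : Q *m Q^T = 1%:M ->
  0 < c -> (forall i, 0 < nu 0 i) ->
  exists2 m, 0 < m & forall u : 'cV[R]_n,
    m * \sum_i u i 0 ^+ 2 <= (u^T *m (c *: (Q *m diag_mx nu *m Q^T)) *m u) 0 0.
Proof.
move=> QQ c0 nu0.
set S := 1 + \sum_j (nu 0 j)^-1.
have S0 : 0 < S by rewrite ltr_pwDl // sumr_ge0 // => j _; rewrite invr_ge0 ltW.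
exists (c / S); first by rewrite divr_gt0.
move=> u; set v := Q^T *m u.
have -> : u^T *m (c *: (Q *m diag_mx nu *m Q^T)) *m u = c *: (v^T *m diag_mx nu *m v).
  by rewrite /v trmx_mul trmxK -scalemxAr -scalemxAl !mulmxA.
rewrite -(sumsq_Q u QQ) -/v mxE -mulrA ler_pM2l //.
rewrite mulr_sumr mxE; apply: ler_sum => i _.
rewrite mul_mx_diag !mxE; set w := \sum_j _.
rewrite mulrAC -expr2 [leRHS]mulrC ler_wpM2r ?sqr_ge0 //.
rewrite -[leRHS]invrK lef_pV2 ?posrE ?invr_gt0 ?nu0 //.
rewrite /S (bigD1 i) //= addrCA ler_wpDr // addr_ge0 // sumr_ge0 // => j _.
by rewrite invr_ge0 ltW.
Qed.
End B.

Section T. Set Implicit Arguments. Unset Strict Implicit. Context {R : realType}.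
Lemma poly2_derive (a b k t : R) :
  is_derive t 1 (fun s : R => 2^-1 * (a + 2 * s * b + s ^+ 2 * k)) (b + t * k).
Proof.
have H1 : is_derive t 1 (fun s : R => s) 1 := is_derive_id _ _.
have H2 : is_derive t 1 (fun s : R => s * s) (t *: 1 + t *: 1) := is_deriveM H1 H1.
have H3 := is_deriveZ (b) H1.
have H4 := is_deriveZ (2^-1 * k) H2.
have H5 := is_deriveD H3 H4.
have H6 := is_deriveD (is_derive_cst (2^-1 * a) t 1) H5.
have -> : (fun s : R => 2^-1 * (a + 2 * s * b + s ^+ 2 * k)) = 
   (cst (2^-1 * a) + ((b \*: id) + ((2^-1 * k) \*: (fun s => s * s)))).
  by apply/funext => s; rewrite !fctE /= /GRing.scale /=; field.
eapply is_derive_eq; first exact: H6.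
by rewrite /GRing.scale /=; field.
Qed.

Lemma aff_derive (c yi t : R) : is_derive t 1 (fun s : R => (c + s) * yi) yi.
Proof.
have H := is_deriveD (is_derive_cst (c * yi) t 1) (is_deriveZ yi (is_derive_id t 1)).
have -> : (fun s : R => (c + s) * yi) = cst (c * yi) + (yi \*: id).
  by apply/funext => s; rewrite !fctE /= /GRing.scale /=; ring.
eapply is_derive_eq; first exact: H.
by rewrite /GRing.scale /=; ring.
Qed.

Lemma lnPsi_derive (Psi psi : R -> R) (c yi t : R) : (forall x, 0 < Psi x) ->
  (forall x, derivable Psi x 1 /\ Psi^`() x = psi x) ->
  is_derive t 1 (fun s => ln (Psi ((c + s) * yi)))
    (yi * psi ((c + t) * yi) / Psi ((c + t) * yi)).
Proof.
move=> Pp D.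
set w := (c + t) * yi.
have HP : is_derive w 1 Psi (psi w).
  have [d e] := D w; rewrite -e derive1E; exact: derivableP.
have Hg : is_derive t 1 (Psi \o (fun s : R => (c + s) * yi)) (psi w * yi).
  by apply: is_derive1_comp; exact: aff_derive.
have Hl : is_derive ((Psi \o (fun s : R => (c + s) * yi)) t) 1 (@ln R) ((Psi w)^-1).
  by apply: is_derive1_ln; rewrite /comp Pp.
have := is_derive1_comp Hl Hg.
move=> H; eapply is_derive_eq; first exact: H.
by rewrite /comp /= mulrC (mulrC (psi w)).
Qed.

Lemma delta_sum_entry n (S : {set 'I_n}) (a : 'I_n -> R) (k : 'I_n) :
  (\sum_(j in S) a j *: delta_mx j (0 : 'I_1)) k 0 = if k \in S then a k else 0.
Proof.
rewrite summxE.
case: ifP => kS.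
  rewrite (bigD1 k) //= !mxE !eqxx mulr1 big1 ?addr0 // => j /andP[_ jk].
  by rewrite !mxE eq_sym (negbTE jk) mulr0.
rewrite big1 // => j jS; rewrite !mxE.
have -> : (k == j) = false by apply/negbTE; apply: contraFneq kS => ->.
by rewrite mulr0.
Qed.

Lemma quad_shift n (K : 'M[R]_n) (u : 'cV[R]_n) (i : 'I_n) (s : R) : K^T = K ->
  ((u + s *: delta_mx i 0)^T *m K *m (u + s *: delta_mx i 0)) 0 0 =
  (u^T *m K *m u) 0 0 + 2 * s * (K *m u) i 0 + s ^+ 2 * K i i.
Proof.
move=> KT.
set e := delta_mx i (0:'I_1).
have tr00 (A : 'M[R]_1) : A 0 0 = A^T 0 0 by rewrite mxE.
have E1 : (e^T *m K *m u) 0 0 = (K *m u) i 0.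
  by rewrite trmx_delta -mulmxA -rowE mxE.
have E2 : (u^T *m K *m e) 0 0 = (K *m u) i 0.
  by rewrite -E1 tr00 !trmx_mul trmxK KT mulmxA.
have E3 : (e^T *m K *m e) 0 0 = K i i.
  by rewrite trmx_delta -rowE -colE !mxE.
have addE (A B : 'M[R]_1) : (A + B) 0 0 = A 0 0 + B 0 0 by rewrite mxE.
have sclE a (A : 'M[R]_1) : (a *: A) 0 0 = a * A 0 0 by rewrite mxE.
have Tr : (u + s *: e)^T = u^T + s *: e^T by rewrite linearD linearZ.
rewrite Tr !mulmxDl !mulmxDr -?scalemxAl -?scalemxAr -?scalemxAl -?scalemxAl.
rewrite !addE !sclE E1 E2 E3.
ring.
Qed.

Definition Jq n (K : 'M[R]_n) (S : {set 'I_n}) (y : 'I_n -> R) (Psi : R -> R)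
  (u : 'cV[R]_n) : R :=
  2^-1 * (u^T *m K *m u) 0 0 - \sum_(j in S) ln (Psi (u j 0 * y j)).

Lemma EL n (K : 'M[R]_n) S y (psi Psi : R -> R) (u : 'cV[R]_n) : K^T = K ->
  (forall x, 0 < Psi x) -> (forall x, derivable Psi x 1 /\ Psi^`() x = psi x) ->
  (forall v, Jq K S y Psi u <= Jq K S y Psi v) ->
  K *m u = \sum_(j in S) Ffun y psi Psi j (u j 0) *: delta_mx j 0.
Proof.
move=> KT Pp D umin.
apply/matrixP => i j0; rewrite ord1 delta_sum_entry.
set a := (u^T *m K *m u) 0 0; set b := (K *m u) i 0; set k := K i i.
set c0 := \sum_(j in S | j != i) ln (Psi (u j 0 * y j)).
pose L s := if i \in S then ln (Psi ((u i 0 + s) * y i)) else 0.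
pose Ld t := if i \in S then y i * psi ((u i 0 + t) * y i) / Psi ((u i 0 + t) * y i) else 0.
have ent s j : (u + s *: delta_mx i 0) j 0 = u j 0 + (if j == i then s else 0).
  by rewrite !mxE eqxx andbT; case: (j == i); rewrite ?mulr1 ?mulr0.
have Phi s : Jq K S y Psi (u + s *: delta_mx i 0) =
    2^-1 * (a + 2 * s * b + s ^+ 2 * k) - (L s + c0).
  rewrite /Jq quad_shift // ; congr (_ - _).
  rewrite /L; case: ifP => iS.
    rewrite (bigD1 i) //= ent eqxx; congr (_ + _); apply: eq_bigr => j /andP[_ ji].
    by rewrite ent (negbTE ji) addr0.
  rewrite add0r /c0 [RHS](eq_bigl (fun j => j \in S)); last first.
    move=> j /=; case jS: (j \in S) => //=.
    by apply/negP => /eqP ji; move: jS; rewrite ji iS.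
  by apply: eq_bigr => j jS; rewrite ent; case: eqP => [ji|]; [by move: jS; rewrite ji iS|rewrite addr0].
have dL (t : R) : is_derive t (1:R) L (Ld t).
  rewrite /L /Ld; case: ifP => iS.
    exact: lnPsi_derive.
  exact: is_derive_cst.
have dphi (t : R) : is_derive t (1:R) (fun s => Jq K S y Psi (u + s *: delta_mx i 0)) (b + t * k - Ld t).
  have -> : (fun s => Jq K S y Psi (u + s *: delta_mx i 0)) =
     (fun s : R => 2^-1 * (a + 2 * s * b + s ^+ 2 * k)) - (L + cst c0).
    by apply/funext => s; rewrite Phi.
  have H := is_deriveB (poly2_derive a b k t) (is_deriveD (dL t) (is_derive_cst c0 t 1)).
  eapply is_derive_eq; first exact: H.
  by rewrite addr0.
have H0 : is_derive (0:R) (1:R) (fun s : R => Jq K S y Psi (u + s *: delta_mx i 0)) 0.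
  apply: (@derive1_at_min _ _ (-1) 1).
  - by apply: (@le_trans _ _ 0); rewrite ?lerN10 ?ler01.
  - by move=> t _; have := dphi t => Hd; exact: ex_derive.
  - by rewrite in_itv /= ltrN10 ltr01.
  - by move=> t _; rewrite scale0r addr0.
have E1 := @derive_val _ _ _ _ _ _ _ H0.
have E2 := @derive_val _ _ _ _ _ _ _ (dphi 0).
rewrite E1 mul0r addr0 in E2.
move/eqP: E2; rewrite eq_sym subr_eq0 => /eqP ->.
by rewrite /Ld /Ffun addr0; case: ifP.
Qed.

Lemma h_mono (psi Psi : R -> R) : (forall x, 0 < Psi x) ->
  (forall x z, x < z -> psi z * Psi x <= psi x * Psi z) ->
  forall a b, (a - b) * (psi a / Psi a - psi b / Psi b) <= 0.
Proof.
move=> Pp rat a b.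
have key x z : x < z -> psi z / Psi z <= psi x / Psi x.
  move=> xz; rewrite ler_pdivrMr // mulrAC ler_pdivlMr // [in leRHS]mulrC.
  by rewrite [leRHS]mulrC; apply: rat.
have [ab|ba|->] := ltgtP a b.
- apply: mulr_le0_ge0; first by rewrite subr_le0 ltW.
  by rewrite subr_ge0 key.
- apply: mulr_ge0_le0; first by rewrite subr_ge0 ltW.
  by rewrite subr_le0 key.
- by rewrite subrr mul0r.
Qed.

Lemma EL_unique n (K : 'M[R]_n) (S : {set 'I_n}) (y : 'I_n -> R) (psi Psi : R -> R) (m : R) (u v : 'cV[R]_n) :
  0 < m -> (forall w : 'cV[R]_n, m * \sum_i w i 0 ^+ 2 <= (w^T *m K *m w) 0 0) ->
  (forall a b, (a - b) * (psi a / Psi a - psi b / Psi b) <= 0) ->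
  K *m u = \sum_(j in S) Ffun y psi Psi j (u j 0) *: delta_mx j 0 ->
  K *m v = \sum_(j in S) Ffun y psi Psi j (v j 0) *: delta_mx j 0 ->
  u = v.
Proof.
move=> m0 coer hm Eu Ev.
set w := u - v.
have E : (w^T *m K *m w) 0 0 =
    \sum_(j in S) w j 0 * (Ffun y psi Psi j (u j 0) - Ffun y psi Psi j (v j 0)).
  rewrite -mulmxA mulmxBr Eu Ev mxE [RHS]big_mkcond /=; apply: eq_bigr => k _.
  have subE (A B : 'cV[R]_n) i : (A - B) i 0 = A i 0 - B i 0 by rewrite !mxE.
  rewrite mxE !subE !delta_sum_entry.
  by case: ifP => _; rewrite ?subrr ?mulr0.
have le0 : (w^T *m K *m w) 0 0 <= 0.
  rewrite E; apply: sumr_le0 => j _.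
  have -> : w j 0 * (Ffun y psi Psi j (u j 0) - Ffun y psi Psi j (v j 0)) =
     (u j 0 * y j - v j 0 * y j) *
     (psi (u j 0 * y j) / Psi (u j 0 * y j) - psi (v j 0 * y j) / Psi (v j 0 * y j)).
    by rewrite /Ffun /w !mxE; ring.
  exact: hm.
have s0 : \sum_i w i 0 ^+ 2 = 0.
  apply/eqP; rewrite eq_le sumr_ge0 ?andbT; last by move=> i _; exact: sqr_ge0.
  by rewrite -(pmulr_rle0 _ m0); exact: le_trans (coer w) le0.
apply/matrixP => i j; rewrite ord1.
have := psumr_eq0P (fun i _ => sqr_ge0 (w i 0)) s0 (i:=i) isT.
by move/eqP; rewrite sqrf_eq0 /w !mxE subr_eq0 => /eqP.
Qed.

Lemma cont_sum n (I : Type) (r : seq I) (P : pred I)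
  (F : I -> 'rV[R]_n -> R) : (forall i, continuous (F i)) ->
  continuous (fun x => \sum_(i <- r | P i) F i x).
Proof.
move=> cF; elim: r => [|a r IH].
  have -> : (fun x => \sum_(i <- [::] | P i) F i x) = cst 0.
    by apply/funext => x; rewrite big_nil.
  exact: cst_continuous.
have -> : (fun x => \sum_(i <- a :: r | P i) F i x) =
  (fun x => (if P a then F a x else 0) + \sum_(i <- r | P i) F i x).
  by apply/funext => x; rewrite big_cons; case: (P a); rewrite ?add0r.
move=> x; apply: continuousD; last exact: IH.
case: (P a); first exact: cF.
exact: cst_continuous.
Qed.

Lemma quad_entry_rV n (K : 'M[R]_n) (v : 'rV[R]_n) :
  (v^T^T *m K *m v^T) 0 0 = \sum_i \sum_k (v 0 i * K i k * v 0 k).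
Proof.
rewrite trmxK mxE exchange_big /=; apply: eq_bigr => k _.
by rewrite !mxE mulr_suml.
Qed.

Lemma exists_min n (K : 'M[R]_n) (S : {set 'I_n}) (y : 'I_n -> R) (Psi : R -> R) (m : R) :
  0 < m -> (forall w : 'cV[R]_n, m * \sum_i w i 0 ^+ 2 <= (w^T *m K *m w) 0 0) ->
  (forall x, 0 < Psi x) -> (forall x, Psi x <= 1) -> continuous Psi ->
  exists u, forall v, Jq K S y Psi u <= Jq K S y Psi v.
Proof.
move=> m0 coer Pp P1 cP.
pose f (v : 'rV[R]_n) := Jq K S y Psi v^T.
have fE : f = fun v => 2^-1 * (\sum_i \sum_k (v 0 i * K i k * v 0 k)) -
                      \sum_(j in S) ln (Psi (v 0 j * y j)).
  apply/funext => v; rewrite /f /Jq -quad_entry_rV trmxK.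
  by congr (_ - _); apply: eq_bigr => j _; rewrite mxE.
have c1 : continuous (fun v : 'rV[R]_n => \sum_i \sum_k (v 0 i * K i k * v 0 k)).
  apply: (cont_sum (F := fun i v => \sum_k (v 0 i * K i k * v 0 k))) => i.
  apply: (cont_sum (F := fun k v => (v 0 i * K i k * v 0 k))) => k w.
  apply: (@continuousM _ _ (fun v : 'rV[R]_n => v 0 i * K i k) (fun v => v 0 k)); last exact: coord_continuous.
  apply: (@continuousM _ _ (fun v : 'rV[R]_n => v 0 i) (cst (K i k))); last exact: cst_continuous.
  exact: coord_continuous.
have c2 : continuous (fun v : 'rV[R]_n => \sum_(j in S) ln (Psi (v 0 j * y j))).
  apply: (cont_sum (F := fun j v => ln (Psi (v 0 j * y j)))) => j w.
  apply: (@continuous_comp _ _ _ (fun v : 'rV[R]_n => Psi (v 0 j * y j)) (@ln R)).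
    apply: (@continuous_comp _ _ _ (fun v : 'rV[R]_n => v 0 j * y j) Psi); last exact: cP.
    apply: (@continuousM _ _ (fun v : 'rV[R]_n => v 0 j) (cst (y j))); last exact: cst_continuous.
    exact: coord_continuous.
  exact: continuous_ln.
have fc : continuous f.
  rewrite fE => v.
  apply: (@continuousB _ _ _ (fun v : 'rV[R]_n => 2^-1 * (\sum_i \sum_k (v 0 i * K i k * v 0 k)))
                              (fun v => \sum_(j in S) ln (Psi (v 0 j * y j)))); last exact: c2.
  apply: (@continuousM _ _ (cst 2^-1) (fun v : 'rV[R]_n => (\sum_i \sum_k (v 0 i * K i k * v 0 k)))); first exact: cst_continuous.
  exact: c1.
have J0 : 0 <= f 0.
  rewrite fE /= big1 ?mulr0 ?sub0r; last first.
    by move=> i _; rewrite big1 // => k _; rewrite mxE !mul0r.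
  by rewrite oppr_ge0 sumr_le0 // => j _; exact: ln_le0.
set r := 2 * f 0 / m + 1.
have r1 : 1 <= r by rewrite lerDr divr_ge0 ?mulr_ge0 // ltW.
pose A := [set v : 'rV[R]_n | forall i, `[-r, r]%classic (v ord0 i)].
have cA : compact A.
  apply: (@rV_compact _ _ (fun=> `[-r, r]%classic)).
  by move=> _; apply: segment_compact.
have A0 : (0 : 'rV[R]_n) \in A.
  rewrite inE /A /= => i; rewrite mxE in_itv /= oppr_le0 (le_trans ler01 r1) /=.
  done.
have nA : A !=set0 by exists 0; rewrite -inE.
have cf : {within A, continuous f} by apply: continuous_subspaceT.
have [c cA' cmin] := EVT_min_rV nA cA cf.
exists c^T => v.
have -> : Jq K S y Psi c^T = f c by [].
have fv : f v^T = Jq K S y Psi v by rewrite /f trmxK.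
rewrite -fv.
have [vA|vA] := boolP (v^T \in A); first exact: cmin.
apply: (le_trans (cmin 0 A0)); apply: ltW.
have [i ni] : exists i, ~ (`[-r, r]%classic (v^T ord0 i)).
  apply/existsNP => H; move/negP: vA; apply; rewrite inE; exact: H.
have vi : r < `|v^T ord0 i|.
  rewrite ltNge; apply/negP => H; apply: ni; rewrite /= in_itv /=.
  by rewrite -ler_norml.
have : m * \sum_k v k 0 ^+ 2 <= (v^T *m K *m v) 0 0 := coer v.
rewrite fv /Jq => Hc.
apply: (@lt_le_trans _ _ (2^-1 * (v^T *m K *m v) 0 0)); last first.
  by rewrite lerBrDr gerDl sumr_le0 // => j _; exact: ln_le0.
apply: (@lt_le_trans _ _ (2^-1 * (m * \sum_k v k 0 ^+ 2))); last first.
  by rewrite ler_pM2l // invr_gt0 ltr0n.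
have vi' : v^T ord0 i = v i 0 by rewrite mxE.
rewrite vi' in vi.
have : r ^+ 2 < v i 0 ^+ 2.
  rewrite -[v i 0 ^+ 2]real_normK ?num_real //.
  set z := `|v i 0| in vi *.
  rewrite !expr2; nra.
move=> sq.
have : v i 0 ^+ 2 <= \sum_k v k 0 ^+ 2.
  rewrite (bigD1 i) //= lerDl sumr_ge0 // => k _; exact: sqr_ge0.
move=> sq2.
have rr : r <= r ^+ 2 by rewrite expr2 ler_peMl // (le_trans ler01 r1).
have : f 0 < 2^-1 * (m * r).
  have -> : 2^-1 * (m * r) = f 0 + m / 2.
    by rewrite /r; field; rewrite gt_eqF.
  by rewrite ltrDl divr_gt0.
move=> H; apply: (lt_le_trans H).
rewrite ler_pM2l ?invr_gt0 ?ltr0n // ler_pM2l //.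
exact: le_trans rr (le_trans (ltW sq) sq2).
Qed.
End T.

Theorem proposition2p4 (R : realType) (N : nat) (W : 'M[R]_N) (p tau2 alpha : R)
  (C : 'M[R]_N) (S : {set 'I_N}) (y : 'I_N -> R) (psi Psi : R -> R) :
  (0 < N)%N ->
  W^T = W ->
  (forall i j, 0 <= W i j) ->
  (forall i, 0 < degree W i) ->
  0 < tau2 -> 0 < alpha ->
  (exists P, is_mx_rpow (normalized_laplacian W p + tau2%:M) (- alpha) P /\
             C = tau2 `^ alpha *: P) ->
  (forall j, j \in S -> y j = 1 \/ y j = -1) ->
  prob_density psi ->
  C1_fun psi ->
  (forall x, psi (- x) = psi x) ->
  strictly_log_concave psi ->
  (forall x, 0 < psi x) ->
  is_cdf_of psi Psi ->
  exists ustar : 'cV[R]_N,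
    [/\ (* (i) unique minimizer *)
        (forall v, Jfun C S y Psi ustar <= Jfun C S y Psi v) /\
        (forall u, (forall v, Jfun C S y Psi u <= Jfun C S y Psi v) -> u = ustar),
        (* (ii) Euler-Lagrange equation *)
        invmx C *m ustar = \sum_(j in S) Ffun y psi Psi j (ustar j 0) *: delta_mx j 0,
        (* (iii) representer form *)
        (exists a : 'I_N -> R, ustar = \sum_(j in S) a j *: col j C) &
        (* (iv) characterization of coefficients *)
        (forall a : 'I_N -> R,
           let u := \sum_(j in S) a j *: col j C in
           invmx C *m u = \sum_(j in S) Ffun y psi Psi j (u j 0) *: delta_mx j 0 <->
           (forall j, j \in S ->
              a j = Ffun y psi Psi j (\sum_(k in S) a k * C j k)))].
Proof.
move=> N0 WT W0 deg0 t0 a0 [P [[Q [lam [QQ lam0 Mdec Pdec]]] CE]] yS pd c1 sym slc pos cdf.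
set mu := map_mx (fun x => x `^ (- alpha)) lam.
set nu := map_mx (fun x => x `^ alpha) lam.
set K := tau2 `^ (- alpha) *: (Q *m diag_mx nu *m Q^T).
have CE' : C = tau2 `^ alpha *: (Q *m diag_mx mu *m Q^T) by rewrite CE Pdec.
have tpos : 0 < tau2 `^ alpha by rewrite powR_gt0.
have CK : C *m K = 1%:M.
  rewrite CE' /K; apply: spd_inv => //.
    by rewrite powRN mulfV // gt_eqF.
  move=> i; rewrite !mxE powRN mulVf // gt_eqF // powR_gt0 //.
have KC : K *m C = 1%:M := mulmx1C CK.
have [Cu _] := mulmx1_unit CK.
have invK : invmx C = K.
  by rewrite -[invmx C]mulmx1 -CK mulmxA mulVmx // mul1mx.
have KT : K^T = K by rewrite /K spd_sym.
have nu0 : forall i, 0 < nu 0 i by move=> i; rewrite mxE powR_gt0.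
have tpos' : 0 < tau2 `^ (- alpha) by rewrite powR_gt0.
have [m m0 coer] := quad_lb QQ tpos' nu0.
have JE : forall u, Jfun C S y Psi u = Jq K S y Psi u by move=> u; rewrite /Jfun /Jq invK.
have Pp := Psi_gt0 pd c1 pos cdf.
have P1 := Psi_le1 pd cdf.
have D := Psi_deriv pd c1 cdf.
have cP : continuous Psi.
  by move=> x; apply: differentiable_continuous; apply/derivable1_diffP; exact: (D x).1.
have hm := h_mono Pp (Psi_ratio pd c1 slc pos cdf).
have [u umin] := exists_min S y m0 coer Pp P1 cP.
have Eu := EL KT Pp D umin.
exists u; split.
- split; first by move=> v; rewrite !JE.
  move=> w wmin.
  have wmin' : forall v, Jq K S y Psi w <= Jq K S y Psi v by move=> v; rewrite -!JE.
  exact: (EL_unique m0 coer hm (EL KT Pp D wmin') Eu).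
- by rewrite invK.
- exists (fun j => Ffun y psi Psi j (u j 0)).
  rewrite -[LHS]mul1mx -CK -mulmxA Eu mulmx_sumr; apply: eq_bigr => j _.
  by rewrite -scalemxAr colE.
- move=> a uu.
  have uE : uu = C *m (\sum_(j in S) a j *: delta_mx j 0).
    by rewrite /uu mulmx_sumr; apply: eq_bigr => j _; rewrite -scalemxAr colE.
  have uent : forall j, uu j 0 = \sum_(k in S) a k * C j k.
    by move=> j; rewrite /uu summxE; apply: eq_bigr => k _; rewrite !mxE.
  rewrite invK uE mulmxA KC mul1mx -uE.
  split.
  + move=> H j jS.
    have := congr1 (fun M : 'cV[R]_N => M j 0) H.
    by rewrite /= !delta_sum_entry jS uent.
  + move=> H; apply/matrixP => i j0; rewrite ord1 !delta_sum_entry.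
    by case: ifP => // iS; rewrite uent; apply: H.
Qed.
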